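(* Fix a mass ratio $0<\mu<1$ and set $e=(1-\mu,0)$, $s=(-\mu,0)$. Let $$V(q)=-\frac{\mu}{|q-e|}-\frac{1-\mu}{|q-s|}-\frac12|q|^2,\qquad q\in\mathbb{R}^2\setminus\{e,s\},$$ and consider the planar circular restricted three-body problem, i.e. the Hamiltonian $H(q,p)=\tfrac12\big((p_1+q_2)^2+(p_2-q_1)^2\big)+V(q)$ on $T^*(\mathbb{R}^2\setminus\{e,s\})$ with the standard symplectic form, whose solutions in configuration space satisfy $$\ddot q_1=2\dot q_2-\frac{\partial V}{\partial q_1}(q),\qquad \ddot q_2=-2\dot q_1-\frac{\partial V}{\partial q_2}(q).$$ Let $\ell_2$ and $\ell_3$ be the collinear Lagrange points defined in the context, and let $c<\min\{V(\ell_2),V(\ell_3)\}$. Then every periodic solution $x\colon\mathbb{R}\to\mathbb{R}^2\setminus\{e,s\}$ of these equations with energy $c$ whose image lies in the bounded Hill's region $\mathfrak{K}_c^b$ has at least two distinct syzygies during each period: if $T>0$ is a period of $x$, there exist at least two distinct times $t\in[0,T)$ with $x_2(t)=0$.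
   Context: The function $u(x)=V(x,0)$ restricted to the $q_1$-axis is strictly concave on each of the intervals $(-\infty,-\mu)$, $(-\mu,1-\mu)$, $(1-\mu,\infty)$ and tends to $-\infty$ at their endpoints. Its unique maxima on these intervals are denoted $\ell_3\in(-\infty,-\mu)$, $\ell_1\in(-\mu,1-\mu)$ and $\ell_2\in(1-\mu,\infty)$ (viewed as points $(\ell_i,0)$ of the plane). These are critical points of $V$ with $V(\ell_1)<V(\ell_2)$ and $V(\ell_1)<V(\ell_3)$. The energy of a solution is the constant value of $H$ along it, where $p=(\dot q_1-q_2,\dot q_2+q_1)$. The Hill's region at energy $c$ is $\mathfrak{K}_c=\{q\in\mathbb{R}^2\setminus\{e,s\}: V(q)\le c\}$. For $c<\min\{V(\ell_2),V(\ell_3)\}$, $\mathfrak{K}_c$ splits into one unbounded connected component and a bounded part $\mathfrak{K}_c^b$, namely the union of the bounded connected components. If $V(\ell_1)\le c$, this bounded part is a single component containing $e$ and $s$ in its closure. If $c<V(\ell_1)$, it consists of two components, one around each of $e$ and $s$. A syzygy of $x$ is a time at which $x$ lies on the $q_1$-axis, i.e. $x_2(t)=0$. *)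

(* Defs.v *)
From Stdlib Require Import Reals.
From Coquelicot Require Import Coquelicot.
Open Scope R_scope.

Definition pt_e (mu : R) : R * R := (1 - mu, 0).
Definition pt_s (mu : R) : R * R := (- mu, 0).

Definition dist2 (q a : R * R) : R :=
  sqrt ((fst q - fst a) ^ 2 + (snd q - snd a) ^ 2).

Definition V (mu : R) (q : R * R) : R :=
  - mu / dist2 q (pt_e mu) - (1 - mu) / dist2 q (pt_s mu)
  - / 2 * (fst q ^ 2 + snd q ^ 2).

Definition dV1 (mu : R) (q : R * R) : R := Derive (fun y => V mu (y, snd q)) (fst q).
Definition dV2 (mu : R) (q : R * R) : R := Derive (fun y => V mu (fst q, y)) (snd q).

Definition H (mu : R) (q p : R * R) : R :=
  / 2 * ((fst p + snd q) ^ 2 + (snd p - fst q) ^ 2) + V mu q.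

Definition in_config (mu : R) (q : R * R) : Prop := q <> pt_e mu /\ q <> pt_s mu.

Definition is_solution (mu : R) (x : R -> R * R) : Prop :=
  forall t,
    in_config mu (x t) /\
    ex_derive (fun u => fst (x u)) t /\ ex_derive (fun u => snd (x u)) t /\
    is_derive (Derive (fun u => fst (x u))) t
      (2 * Derive (fun u => snd (x u)) t - dV1 mu (x t)) /\
    is_derive (Derive (fun u => snd (x u))) t
      (- 2 * Derive (fun u => fst (x u)) t - dV2 mu (x t)).

Definition momentum (x : R -> R * R) (t : R) : R * R :=
  (Derive (fun u => fst (x u)) t - snd (x t), Derive (fun u => snd (x u)) t + fst (x t)).

Definition has_energy (mu : R) (x : R -> R * R) (c : R) : Prop :=
  forall t, H mu (x t) (momentum x t) = c.

Definition Hill (mu c : R) (q : R * R) : Prop := in_config mu q /\ V mu q <= c.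

Definition connected_set (A : R * R -> Prop) : Prop :=
  forall U W : R * R -> Prop, open U -> open W ->
    (forall z, A z -> U z \/ W z) ->
    (exists z, A z /\ U z) -> (exists z, A z /\ W z) ->
    exists z, A z /\ U z /\ W z.

Definition component (A : R * R -> Prop) (q z : R * R) : Prop :=
  exists C : R * R -> Prop,
    (forall w, C w -> A w) /\ connected_set C /\ C q /\ C z.

Definition bounded_set (A : R * R -> Prop) : Prop :=
  exists M, forall z, A z -> fst z ^ 2 + snd z ^ 2 <= M.

Definition Hill_bounded (mu c : R) (q : R * R) : Prop :=
  Hill mu c q /\ bounded_set (component (Hill mu c) q).

Definition is_l2 (mu l : R) : Prop :=
  1 - mu < l /\ forall y, 1 - mu < y -> V mu (y, 0) <= V mu (l, 0).
Definition is_l3 (mu l : R) : Prop :=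
  l < - mu /\ forall y, y < - mu -> V mu (y, 0) <= V mu (l, 0).

(* Main.v *)
Require Import Defs.
From Stdlib Require Import Reals Lra Psatz Classical.
From Coquelicot Require Import Coquelicot.
Open Scope R_scope.

Definition fF (mu : R) (q : R*R) : R :=
  mu / (dist2 q (pt_e mu)) ^ 3 + (1 - mu) / (dist2 q (pt_s mu)) ^ 3 - 1.

Lemma sqpos x : x <> 0 -> 0 < x ^ 2.
Proof. intros h. replace (x^2) with (x*x) by ring. now apply Rsqr_pos_lt. Qed.

Lemma rad_pos q a : q <> a -> 0 < (fst q - fst a)^2 + (snd q - snd a)^2.
Proof.
  intros H.
  destruct q as [q1 q2], a as [a1 a2]; simpl.
  pose proof (pow2_ge_0 (q1-a1)). pose proof (pow2_ge_0 (q2-a2)).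
  destruct (Req_dec q1 a1) as [->|h1].
  - destruct (Req_dec q2 a2) as [->|h2]. elim H; reflexivity.
    assert (q2 - a2 <> 0) by lra. pose proof (sqpos _ H2). lra.
  - assert (q1 - a1 <> 0) by lra. pose proof (sqpos _ H2). lra.
Qed.

Lemma dist2_pos q a : q <> a -> 0 < dist2 q a.
Proof. intros H. unfold dist2. apply sqrt_lt_R0. now apply rad_pos. Qed.

Lemma dV2_is mu a y : in_config mu (a,y) ->
  is_derive (fun z => V mu (a, z)) y (y * fF mu (a,y)).
Proof.
  intros [He Hs].
  pose proof (rad_pos _ _ He) as P1. pose proof (rad_pos _ _ Hs) as P2.
  unfold fF, V, dist2 in *; simpl in *.
  auto_derive; replace (y + - 0) with y by ring; replace (y - 0) with y in * by ring.
  - repeat split; try lra; apply Rgt_not_eq, sqrt_lt_R0; lra.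
  - assert (Q1 := sqrt_lt_R0 _ P1). assert (Q2 := sqrt_lt_R0 _ P2).
    set (S1 := sqrt _) in *. set (S2 := sqrt _) in *. field. lra.
Qed.

Lemma tangent s s0 : 0 < s -> 0 < s0 -> / s0 - (s^2 - s0^2) / (2 * s0^3) <= / s.
Proof.
  intros hs hs0.
  assert (E : / s - (/ s0 - (s^2 - s0^2) / (2 * s0^3)) = (s - s0)^2 * (s + 2*s0) / (2 * s * s0^3)).
  { field. lra. }
  assert (0 <= (s - s0)^2 * (s + 2*s0) / (2 * s * s0^3)).
  { apply Rdiv_le_0_compat. apply Rmult_le_pos. apply pow2_ge_0. lra.
    assert (0 < s0^3) by (apply pow_lt; lra). nra. }
  lra.
Qed.

Lemma ray_le mu a y lam : 0 < mu < 1 -> in_config mu (a,y) -> fF mu (a,y) <= 0 -> 1 <= lam ->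
  V mu (a, lam * y) <= V mu (a, y).
Proof.
  intros Hmu [He Hs] Hf Hl.
  pose proof (dist2_pos _ _ He) as P1. pose proof (dist2_pos _ _ Hs) as P2.
  pose proof (rad_pos _ _ He) as R1. pose proof (rad_pos _ _ Hs) as R2.
  unfold fF, V in *. unfold dist2, pt_e, pt_s in *; cbn [fst snd] in *.
  replace (y - 0) with y in * by ring. replace (lam * y - 0) with (lam*y) by ring.
  set (A1 := (a - (1 - mu))^2) in *. set (A2 := (a - - mu)^2) in *.
  assert (hA1 : 0 <= A1) by apply pow2_ge_0. assert (hA2 : 0 <= A2) by apply pow2_ge_0.
  assert (hy : 0 <= y^2) by apply pow2_ge_0.
  assert (hD : y^2 <= (lam*y)^2). { replace ((lam*y)^2) with (lam^2 * y^2) by ring. assert (1 <= lam^2) by nra. nra. }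
  assert (R1' : 0 < A1 + (lam*y)^2) by lra. assert (R2' : 0 < A2 + (lam*y)^2) by lra.
  pose proof (sqrt_lt_R0 _ R1') as P1'. pose proof (sqrt_lt_R0 _ R2') as P2'.
  pose proof (tangent _ _ P1' P1) as T1. pose proof (tangent _ _ P2' P2) as T2.
  rewrite !pow2_sqrt in T1, T2 by lra.
  set (s0 := sqrt (A1 + y^2)) in *. set (t0 := sqrt (A2 + y^2)) in *.
  set (s := sqrt (A1 + (lam*y)^2)) in *. set (t := sqrt (A2 + (lam*y)^2)) in *.
  set (D := (lam*y)^2 - y^2).
  assert (E1 : A1 + (lam * y) ^ 2 - (A1 + y^2) = D) by (unfold D; ring).
  assert (E2 : A2 + (lam * y) ^ 2 - (A2 + y^2) = D) by (unfold D; ring).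
  rewrite E1 in T1. rewrite E2 in T2.
  assert (hD' : 0 <= D) by (unfold D; lra).
  assert (s0p : 0 < s0^3) by (apply pow_lt; lra). assert (t0p : 0 < t0^3) by (apply pow_lt; lra).
  assert (K1 : - mu / s <= - mu / s0 + mu * (D / (2 * s0^3))).
  { unfold Rdiv. replace (- mu * / s) with (- (mu * / s)) by ring.
    replace (- mu * / s0) with (- (mu * / s0)) by ring.
    assert (mu * (/ s0 - D / (2 * s0 ^ 3)) <= mu * / s) by (apply Rmult_le_compat_l; lra).
    unfold Rdiv in H. lra. }
  assert (K2 : - (1 - mu) / t <= - (1-mu) / t0 + (1-mu) * (D / (2 * t0^3))).
  { unfold Rdiv. replace (- (1-mu) * / t) with (- ((1-mu) * / t)) by ring.
    replace (- (1-mu) * / t0) with (- ((1-mu) * / t0)) by ring.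
    assert ((1-mu) * (/ t0 - D / (2 * t0 ^ 3)) <= (1-mu) * / t) by (apply Rmult_le_compat_l; lra).
    unfold Rdiv in H. lra. }
  assert (Eq : mu * (D / (2 * s0^3)) + (1-mu) * (D / (2 * t0^3)) - / 2 * D
     = D / 2 * (mu / s0 ^ 3 + (1 - mu) / t0 ^ 3 - 1)) by (field; lra).
  assert (D / 2 * (mu / s0 ^ 3 + (1 - mu) / t0 ^ 3 - 1) <= 0).
  { assert (0 <= D/2) by lra. rewrite <- (Rmult_0_r (D/2)). apply Rmult_le_compat_l; lra. }
  assert (Ey : / 2 * (a ^ 2 + (lam * y) ^ 2) = / 2 * (a^2 + y^2) + / 2 * D) by (unfold D; ring).
  rewrite Ey. lra.
Qed.

Definition openP (P : R -> Prop) := forall s, P s -> exists d, 0 < d /\ forall s', Rabs (s' - s) < d -> P s'.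

Lemma interval_conn (P Q : R -> Prop) a b : a <= b -> P a -> Q b ->
  (forall s, a <= s <= b -> P s \/ Q s) -> openP P -> openP Q ->
  exists s, a <= s <= b /\ P s /\ Q s.
Proof.
  intros hab Pa Qb Hc oP oQ.
  set (E := fun s => a <= s <= b /\ P s).
  assert (bE : bound E) by (exists b; intros s [h _]; lra).
  assert (nE : exists s, E s) by (exists a; split; [lra|auto]).
  destruct (completeness E bE nE) as [m [Hub Hlub]].
  assert (am : a <= m) by (apply Hub; split; [lra|auto]).
  assert (mb : m <= b) by (apply Hlub; intros s [h _]; lra).
  destruct (Hc m (conj am mb)) as [Pm|Qm].
  - destruct (Req_dec m b) as [->|hmb].
    + exists b; repeat split; auto; lra.
    + exfalso. destruct (oP m Pm) as [d [hd Hd]].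
      set (s' := Rmin (m + d/2) b).
      assert (m < s') by (unfold s'; apply Rmin_glb_lt; lra).
      assert (s' <= b) by apply Rmin_r.
      assert (E s') . { split. lra. apply Hd. unfold s'. 
        assert (Rmin (m + d/2) b <= m + d/2) by apply Rmin_l.
        unfold s' in *. rewrite Rabs_right; lra. }
      specialize (Hub s' H1). lra.
  - destruct (classic (P m)) as [Pm|nPm].
    + exists m; repeat split; auto.
    + destruct (oQ m Qm) as [d [hd Hd]].
      assert (am' : a < m) by (destruct (Req_dec a m) as [<-|]; [contradiction|lra]).
      set (d' := Rmin d (m - a) / 2).
      assert (0 < Rmin d (m - a)) by (apply Rmin_glb_lt; lra).
      assert (Rmin d (m - a) <= d) by apply Rmin_l.
      assert (Rmin d (m - a) <= m - a) by apply Rmin_r.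
      destruct (classic (exists s, E s /\ m - d' < s)) as [[s [[h1 h2] h3]]|hn].
      * assert (s <= m) by (apply Hub; split; auto).
        exists s; repeat split; try lra; auto. apply Hd. unfold d' in h3.
        rewrite Rabs_left1; lra.
      * exfalso. assert (m <= m - d'). { apply Hlub. intros s Es.
          destruct (Rle_dec s (m - d')) as [|hs]; auto. elim hn. exists s; split; auto; lra. }
        unfold d' in H2. lra.
Qed.

Lemma ball_R (x y e : R) : Rabs (y - x) < e -> ball x e y.
Proof. intros h. exact h. Qed.

Lemma open_line (U : R*R -> Prop) a y : open U -> openP (fun s => U (a, s * y)).
Proof.
  intros oU s Us. destruct (oU _ Us) as [eps Heps].
  exists (eps / (Rabs y + 1)). split.
  { apply Rdiv_lt_0_compat. apply cond_pos. pose proof (Rabs_pos y); lra. }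
  intros s' hs'. apply Heps. split.
  - apply ball_R. cbn [fst snd]. rewrite Rminus_diag, Rabs_R0. apply cond_pos.
  - apply ball_R. cbn [fst snd]. replace (s' * y - s * y) with ((s' - s) * y) by ring.
    rewrite Rabs_mult. pose proof (Rabs_pos y). pose proof (Rabs_pos (s' - s)).
    pose proof (cond_pos eps).
    apply Rmult_lt_compat_r with (r := Rabs y + 1) in hs'; [|lra].
    unfold Rdiv in hs'. rewrite Rmult_assoc, Rinv_l in hs' by lra. nra.
Qed.

Lemma bounded_f mu c q : 0 < mu < 1 -> Hill_bounded mu c q -> snd q <> 0 -> 0 < fF mu q.
Proof.
  intros Hmu [[Hcf HV] [M HM]] hy.
  destruct q as [a y]; cbn [snd] in hy.
  destruct (Rlt_le_dec 0 (fF mu (a,y))) as [|Hf]; auto. exfalso.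
  set (C := fun z : R*R => exists lam, 1 <= lam /\ z = (a, lam * y)).
  assert (HC : forall z, C z -> Hill mu c z).
  { intros z [lam [hl ->]]. split.
    - split; intros h; injection h; intros; apply hy;
      apply Rmult_eq_reg_l with lam; lra.
    - pose proof (ray_le mu a y lam Hmu Hcf Hf hl). lra. }
  assert (Cc : connected_set C).
  { intros U W oU oW cov [z1 [[l1 [h1 ->]] U1]] [z2 [[l2 [h2 ->]] W2]].
    assert (cov' : forall s, 1 <= s -> U (a, s*y) \/ W (a, s*y)).
    { intros s hs. apply cov. exists s; split; auto. }
    destruct (Rle_dec l1 l2) as [hl|hl].
    - destruct (interval_conn (fun s => U (a, s*y)) (fun s => W (a, s*y)) l1 l2 hl U1 W2)
        as [s [hs [Us Ws]]]; auto.
      + intros s hs. apply cov'. lra.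
      + apply open_line; auto.
      + apply open_line; auto.
      + exists (a, s*y). split; auto. exists s; split; auto; lra.
    - destruct (interval_conn (fun s => W (a, s*y)) (fun s => U (a, s*y)) l2 l1) 
        as [s [hs [Ws Us]]]; auto; try lra.
      + intros s hs. destruct (cov' s); auto; lra.
      + apply open_line; auto.
      + apply open_line; auto.
      + exists (a, s*y). split; auto. exists s; split; auto; lra. }
  assert (hy2 : 0 < y^2) by (apply sqpos; auto).
  set (lam := 1 + (Rabs M + 1) / y^2).
  assert (hl : 1 <= lam).
  { unfold lam. assert (0 < (Rabs M + 1) / y^2) by (apply Rdiv_lt_0_compat; pose proof (Rabs_pos M); lra). lra. }
  assert (Hz := HM (a, lam * y)).
  cbn [fst snd] in Hz.
  assert (Hcomp : component (Hill mu c) (a, y) (a, lam * y)).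
  { exists C. split; [exact HC|split; [exact Cc|split]].
    - exists 1; split; [lra|]. f_equal; ring.
    - exists lam; split; auto. }
  specialize (Hz Hcomp).
  pose proof (pow2_ge_0 a).
  assert (E : (lam * y)^2 = lam^2 * y^2) by ring.
  assert (lam * y^2 = y^2 + (Rabs M + 1)) by (unfold lam; field; lra).
  assert (lam * y^2 <= lam^2 * y^2) by (apply Rmult_le_compat_r; nra).
  pose proof (Rle_abs M). lra.
Qed.

Lemma ivt0 (h : R -> R) a b : continuity h -> a < b -> h a * h b < 0 ->
  exists z, a < z < b /\ h z = 0.
Proof.
  intros hc hab hs.
  assert (Hm : Rmin (h a) (h b) <= 0 <= Rmax (h a) (h b)).
  { destruct (Rle_dec (h a) 0).
    - assert (0 <= h b) by nra. rewrite Rmin_left, Rmax_right; lra.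
    - assert (h b <= 0) by nra. rewrite Rmin_right, Rmax_left; lra. }
  destruct (IVT_gen h a b 0 hc Hm) as [z [hz hz0]].
  rewrite Rmin_left, Rmax_right in hz by lra.
  exists z; split; auto.
  split; destruct hz as [h1 h2]; apply Rnot_le_lt; intros h3.
  - assert (z = a) by lra. subst. rewrite hz0 in hs. lra.
  - assert (z = b) by lra. subst. rewrite hz0 in hs. lra.
Qed.

Lemma two_zeros (h : R -> R) T a b : continuity h -> (forall t, h (t+T) = h t) ->
  0 <= a -> a < b -> b < T -> h a * h b < 0 ->
  exists t1 t2, 0<=t1<T /\ 0<=t2<T /\ t1<>t2 /\ h t1 = 0 /\ h t2 = 0.
Proof.
  intros hc hp ha hab hb hs.
  destruct (ivt0 h a b hc hab hs) as [z1 [hz1 e1]].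
  assert (hs' : h b * h (a + T) < 0) by (rewrite hp; lra).
  destruct (ivt0 h b (a+T) hc ltac:(lra) hs') as [z2 [hz2 e2]].
  destruct (Rlt_le_dec z2 T).
  - exists z1, z2. repeat split; auto; lra.
  - exists z1, (z2 - T). repeat split; try lra.
    rewrite <- hp. replace (z2 - T + T) with z2 by ring. auto.
Qed.

Theorem theorem1p1 (mu l2 l3 c : R) (x : R -> R * R) (T : R) :
  0 < mu < 1 ->
  is_l2 mu l2 -> is_l3 mu l3 ->
  c < Rmin (V mu (l2, 0)) (V mu (l3, 0)) ->
  is_solution mu x ->
  has_energy mu x c ->
  (forall t, Hill_bounded mu c (x t)) ->
  0 < T -> (forall t, x (t + T) = x t) ->
  exists t1 t2, 0 <= t1 < T /\ 0 <= t2 < T /\ t1 <> t2 /\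
    snd (x t1) = 0 /\ snd (x t2) = 0.
Proof.
  intros Hmu _ _ _ Hsol _ Hbd HT Hper.
  set (x1 := fun u => fst (x u)). set (x2 := fun u => snd (x u)).
  assert (Hdv : forall t, dV2 mu (x t) = x2 t * fF mu (x t)).
  { intros t. destruct (Hsol t) as [hc _]. unfold dV2, x2.
    destruct (x t) as [a y]. cbn [fst snd]. apply is_derive_unique. apply dV2_is; auto. }
  assert (Hf : forall t, x2 t <> 0 -> 0 < fF mu (x t)).
  { intros t h. apply (bounded_f mu c); auto. }
  assert (Hc2 : continuity x2).
  { intros t. apply continuity_pt_filterlim.
    destruct (Hsol t) as [_ [_ [h _]]]. exact (ex_derive_continuous x2 t h). }
  assert (Hp2 : forall t, x2 (t + T) = x2 t) by (intros t; unfold x2; rewrite Hper; auto).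
  assert (Z : forall sg, (sg = 1 \/ sg = -1) -> (forall t, 0 <= t < T -> 0 <= sg * x2 t) ->
             forall t, 0 < t < T -> x2 t = 0).
  { intros sg Hsg Hpos.
    set (g := fun u => sg * (Derive x2 u + 2 * x1 u)).
    set (dg := fun u => - sg * dV2 mu (x u)).
    assert (Hg : forall u, is_derive g u (dg u)).
    { intros u. destruct (Hsol u) as [_ [h1 [h2 [h3 h4]]]].
      pose proof (is_derive_scal _ _ sg _ (is_derive_plus (Derive x2) (fun u => 2 * x1 u) u _ _ h4
          (is_derive_scal _ _ 2 _ (Derive_correct _ _ h1)))) as H.
      assert (E : dg u = sg * (plus (- 2 * Derive x1 u - dV2 mu (x u)) (2 * Derive x1 u))).
      { unfold dg, plus; simpl. ring. }
      rewrite E. exact H. }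
    assert (Hx2T : x2 T = x2 0) by (rewrite <- (Hp2 0); f_equal; ring).
    assert (Hsign : forall u, 0 <= u <= T -> dg u <= 0).
    { intros u hu. unfold dg. rewrite Hdv.
      assert (hp : 0 <= sg * x2 u).
      { destruct (Req_dec u T) as [->|hne]. rewrite Hx2T. apply Hpos; lra. apply Hpos; lra. }
      destruct (Req_dec (x2 u) 0) as [e|ne].
      - rewrite e. lra.
      - pose proof (Hf u ne).
        replace (- sg * (x2 u * fF mu (x u))) with (- ((sg * x2 u) * fF mu (x u))) by ring.
        assert (0 <= (sg * x2 u) * fF mu (x u)) by (apply Rmult_le_pos; lra). lra. }
    assert (Hcont : forall u, continuity_pt g u).
    { intros u. apply continuity_pt_filterlim.
      exact (ex_derive_continuous g u (ex_intro _ _ (Hg u))). }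
    assert (Hmono : forall s t, 0 <= s <= t -> t <= T -> g t <= g s).
    { intros s t hs ht.
      destruct (MVT_gen g s t dg) as [cc [hcc Hcc]].
      - intros; apply Hg.
      - intros; apply Hcont.
      - rewrite Rmin_left in hcc by lra. rewrite Rmax_right in hcc by lra.
        assert (dg cc <= 0) by (apply Hsign; lra).
        assert (dg cc * (t - s) <= 0).
        { replace (dg cc * (t - s)) with (- ((- dg cc) * (t - s))) by ring.
          assert (0 <= (- dg cc) * (t - s)) by (apply Rmult_le_pos; lra). lra. }
        lra. }
    assert (HgT : g T = g 0).
    { unfold g. f_equal. f_equal.
      - rewrite (Derive_ext x2 (fun u => x2 (u + T)) 0) by (intros; rewrite Hp2; auto).
        destruct (Hsol (0 + T)) as [_ [_ [h2 _]]].
        symmetry. apply is_derive_unique.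
        assert (hl : is_derive (fun u : R => u + T) 0 1) by (auto_derive; auto; ring).
        pose proof (is_derive_comp x2 (fun u => u + T) 0 _ _ (Derive_correct _ _ h2) hl) as H.
        rewrite Rplus_0_l in H. unfold scal in H; simpl in H. unfold mult in H; simpl in H.
        rewrite Rmult_1_l in H. exact H.
      - f_equal. unfold x1. rewrite <- (Hper 0). rewrite Rplus_0_l. reflexivity. }
    intros t ht.
    assert (Hgt : g t = g 0).
    { assert (g t <= g 0) by (apply Hmono; lra).
      assert (g T <= g t) by (apply Hmono; lra). lra. }
    assert (Hd0 : is_derive g t 0).
    { apply (is_derive_ext_loc (fun _ => g 0)).
      - assert (hpos : 0 < Rmin t (T - t)) by (apply Rmin_glb_lt; lra).
        exists (mkposreal _ hpos). intros u hu.
        change (Rabs (u - t) < Rmin t (T - t)) in hu.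
        pose proof (Rmin_l t (T - t)). pose proof (Rmin_r t (T - t)).
        apply Rabs_lt_between in hu.
        symmetry. apply Rle_antisym.
        + apply Hmono; lra.
        + rewrite <- HgT. apply Hmono; lra.
      - exact (is_derive_const (g 0) t). }
    pose proof (is_derive_unique _ _ _ Hd0) as e0.
    rewrite (is_derive_unique _ _ _ (Hg t)) in e0.
    unfold dg in e0. rewrite Hdv in e0.
    destruct (Req_dec (x2 t) 0) as [|ne]; auto.
    exfalso. pose proof (Hf t ne).
    assert (sg * x2 t <> 0) by (destruct Hsg; subst; lra).
    assert ((sg * x2 t) * fF mu (x t) <> 0) by (apply Rmult_integral_contrapositive; split; lra).
    apply H1. lra. }
  assert (Fin : (forall t, 0 < t < T -> x2 t = 0) ->
     exists t1 t2, 0 <= t1 < T /\ 0 <= t2 < T /\ t1 <> t2 /\ snd (x t1) = 0 /\ snd (x t2) = 0).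
  { intros Hz. exists (T/3), (2*T/3). repeat split; try lra; apply (Hz); lra. }
  destruct (classic (exists a, 0 <= a < T /\ x2 a > 0)) as [[a [ha pa]]|Hna];
  destruct (classic (exists b, 0 <= b < T /\ x2 b < 0)) as [[b [hb pb]]|Hnb].
  - destruct (Rlt_le_dec a b).
    + apply (two_zeros x2 T a b); auto; try lra. nra.
    + assert (b <> a) by (intro; subst; lra).
      apply (two_zeros x2 T b a); auto; try lra. nra.
  - apply Fin. apply (Z 1); auto. intros t ht. rewrite Rmult_1_l.
    apply Rnot_lt_le. intro h. apply Hnb. exists t; split; auto.
  - apply Fin. apply (Z (-1)); auto. intros t ht.
    assert (x2 t <= 0). { apply Rnot_lt_le. intro h. apply Hna. exists t; split; auto. }
    lra.
  - apply Fin. apply (Z 1); auto. intros t ht. rewrite Rmult_1_l.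
    apply Rnot_lt_le. intro h. apply Hnb. exists t; split; auto.
Qed.
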